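(* Let $G$ be a simple plane graph on $n\geq 2$ vertices that contains neither $K_4$ nor $C_6$ as a subgraph, and such that every maximal $2$-connected subgraph of $G$ has at most $5$ vertices. Then $e(G)\leq \frac{31}{15}n-\frac{7}{3}$.
   Context: $K_4$ is the complete graph on $4$ vertices, $C_6$ the cycle on $6$ vertices; $e(G)$ is the number of edges of $G$. A maximal $2$-connected subgraph (a block) is understood in the usual sense, where a single edge (bridge) counts as a block on $2$ vertices. *)

(* Defs.v *)
(* A finite simple graph is a symmetric irreflexive
   relation g : rel T on a finType T (vertex set = T). *)
From mathcomp Require Import all_boot all_order all_algebra.
Set Implicit Arguments. Unset Strict Implicit. Unset Printing Implicit Defensive.

Section Graphs.
Variable T : finType.
Variable g : rel T.

Definition edges : {set {set T}} :=
  [set E : {set T} | [exists u, exists v, g u v && (E == [set u; v])]].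

Definition nedges : nat := #|edges|.

Definition has_K4 : Prop :=
  exists f : 'I_4 -> T, injective f /\ forall i j : 'I_4, i != j -> g (f i) (f j).

Definition has_C6 : Prop :=
  exists f : 'I_6 -> T, injective f /\
    forall i : 'I_6, g (f i) (f (inZp i.+1)).

Definition induced_connected (S : {set T}) : Prop :=
  {in S &, forall x y, connect [rel a b | (a \in S) && (b \in S) && g a b] x y}.

(* the subgraph induced on S is 2-connected, where (as in the paper) a single
   edge (bridge) counts as 2-connected on 2 vertices: at least 2 vertices,
   connected, and connected after deleting any single vertex *)
Definition two_connected (S : {set T}) : Prop :=
  2 <= #|S| /\ induced_connected S /\ forall v, v \in S -> induced_connected (S :\ v).

Definition is_block (S : {set T}) : Prop :=
  two_connected S /\ forall S' : {set T}, S \subset S' -> two_connected S' -> S' = S.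

Definition rotation_system (rho : T -> T -> T) : Prop :=
  forall v,
    {in [pred u | g v u], forall u, g v (rho v u)} /\
    {in [pred u | g v u] &, injective (rho v)} /\
    {in [pred u | g v u] &, forall u w, exists k, iter k (rho v) u = w}.

Definition is_dart (d : T * T) : bool := g d.1 d.2.

Definition face_map (rho : T -> T -> T) (d : T * T) : T * T :=
  if is_dart d then (d.2, rho d.2 d.1) else d.

Definition nfaces (rho : T -> T -> T) : nat := n_comp (frel (face_map rho)) is_dart.

Definition ncomponents : nat := n_comp g [pred x : T | true].
Definition nisolated : nat := #|[set v : T | [forall u, ~~ g v u]]|.
Definition ndarts : nat := #|[pred d : T * T | is_dart d]|.

(* G is planar iff it has a rotation system of genus 0 on every component:
   V - E + F = 2 * (#components with an edge) + #isolated vertices,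
   i.e. 2V + 2F + 2*iso = 4*comp + #darts (#darts = 2E). *)
Definition planar : Prop :=
  exists rho, rotation_system rho /\
    2 * (#|T| + nfaces rho + nisolated) = 4 * ncomponents + ndarts.

End Graphs.

(* Main.v *)
Require Import Defs.
From mathcomp Require Import all_boot all_order all_algebra.
From mathcomp Require Import zify ring lra.
From Stdlib Require Import Classical.
Import Order.TTheory GRing.Theory Num.Theory.

Set Implicit Arguments. Unset Strict Implicit. Unset Printing Implicit Defensive.

Definition eV (T : finType) (g : rel T) (V : {set T}) :=
  #|[set E in edges g | E \subset V]|.

Lemma edgesP (T : finType) (g : rel T) E :
  reflect (exists u v, g u v /\ E = [set u; v]) (E \in edges g).
Proof.
rewrite /edges inE; apply: (iffP existsP) => [[u /existsP [v /andP [guv /eqP ->]]]|].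
  by exists u, v.
by move=> [u [v [guv ->]]]; exists u; apply/existsP; exists v; rewrite guv eqxx.
Qed.
Arguments edgesP {T g E}.

Lemma eV_pairs (T : finType) (g : rel T) (V : {set T}) (M : {set {set T}}) :
  irreflexive g ->
  M \subset [set A : {set T} | A \subset V & #|A| == 2] ->
  [disjoint M & edges g] ->
  (eV g V + #|M| <= 'C(#|V|, 2))%N.
Proof.
move=> irr sM dM.
set P := [set A : {set T} | A \subset V & #|A| == 2].
have sub : [set E in edges g | E \subset V] \subset P :\: M.
  apply/subsetP => E; rewrite [E \in _]inE => /andP [/edgesP [u [v [guv ->]]] sV].
  have nuv : u != v by apply/eqP => euv; move: guv; rewrite euv irr.
  rewrite in_setD [_ \in P]inE sV cards2 nuv andbT; apply/negP => inM.
  suff : [set u; v] \in edges g by rewrite (disjointFr dM inM).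
  apply/edgesP; by exists u, v.
have := subset_leq_card sub.
rewrite cardsD (setIidPr sM) -cards_draws -/P => h.
have := subset_leq_card sM; rewrite -/P /eV => h2.
by rewrite -(leq_add2r #|M|) subnK in h.
Qed.

Lemma eV_le_C (T : finType) (g : rel T) (V : {set T}) :
  irreflexive g -> (eV g V <= 'C(#|V|, 2))%N.
Proof.
move=> irr; have := @eV_pairs T g V set0 irr (sub0set _).
rewrite cards0 addn0; apply; by rewrite disjoints_subset sub0set.
Qed.

Lemma nonedge (T : finType) (g : rel T) p q :
  symmetric g -> ~~ g p q -> [set p; q] \notin edges g.
Proof.
move=> sym ngpq; apply/negP => /edgesP [u [v [guv e]]].
have pin : p \in [set u; v] by rewrite -e !inE eqxx.
have qin : q \in [set u; v] by rewrite -e !inE eqxx orbT.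
have uin : u \in [set p; q] by rewrite e !inE eqxx.
have vin : v \in [set p; q] by rewrite e !inE eqxx orbT.
suff : g p q by rewrite (negbTE ngpq).
move: pin qin uin vin; rewrite !inE.
by move=> /orP[]/eqP-> /orP[]/eqP-> /orP[]/eqP ? /orP[]/eqP ?; subst;
  rewrite ?guv // sym guv.
Qed.

Lemma K4_of_clique (T : finType) (g : rel T) (W : {set T}) :
  #|W| = 4 -> {in W &, forall x y, x != y -> g x y} -> has_K4 g.
Proof.
move=> cW cl.
exists (fun i : 'I_4 => enum_val (cast_ord (esym cW) i)); split.
  by move=> i j /enum_val_inj /cast_ord_inj.
move=> i j nij; apply: cl; try exact: enum_valP.
apply: contra nij => /eqP /enum_val_inj /cast_ord_inj ->; exact: eqxx.
Qed.

Lemma not_clique (T : finType) (g : rel T) (W : {set T}) :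
  ~ has_K4 g -> #|W| = 4 ->
  exists p q, [/\ p \in W, q \in W, p != q & ~~ g p q].
Proof.
move=> nK cW; apply: NNPP => H; apply: nK; apply: (K4_of_clique cW).
move=> x y xW yW nxy; apply/negPn/negP => ng; apply: H; by exists x, y.
Qed.

Lemma eV4 (T : finType) (g : rel T) (V : {set T}) :
  symmetric g -> irreflexive g -> ~ has_K4 g -> #|V| = 4 -> (eV g V <= 5)%N.
Proof.
move=> sym irr nK cV.
have [p [q [pV qV npq ng]]] := not_clique nK cV.
suff h : (eV g V + #|[set [set p; q]]| <= 'C(#|V|, 2))%N.
  by rewrite cards1 cV addn1 in h.
apply: eV_pairs => //.
  apply/subsetP => X; rewrite inE => /eqP ->; rewrite inE cards2 npq andbT.
  by apply/subsetP => x; rewrite !inE => /orP [] /eqP ->.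
rewrite disjoint_sym disjoints_subset; apply/subsetP => X /edgesP [u [v [guv ->]]].
rewrite !inE; apply/negP => /eqP e; move: (nonedge sym ng); rewrite -e.
by move/negP; apply; apply/edgesP; exists u, v.
Qed.

Lemma eV5 (T : finType) (g : rel T) (V : {set T}) :
  symmetric g -> irreflexive g -> ~ has_K4 g -> #|V| = 5 -> (eV g V <= 8)%N.
Proof.
move=> sym irr nK cV.
have [a aV] : exists a, a \in V.
  by apply/set0Pn; rewrite -card_gt0 cV.
have cVa : #|V :\ a| = 4 by move: (cardsD1 a V); rewrite aV cV => -[].
have [p [q [pV qV npq ng]]] := not_clique nK cVa.
have pV' : p \in V by move: pV; rewrite inE => /andP[].
have qV' : q \in V by move: qV; rewrite inE => /andP[].
have cVp : #|V :\ p| = 4 by move: (cardsD1 p V); rewrite pV' cV => -[].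
have [r [s [rV sV nrs ng2]]] := not_clique nK cVp.
have rV' : r \in V by move: rV; rewrite inE => /andP[].
have sV' : s \in V by move: sV; rewrite inE => /andP[].
have ne : [set p; q] != [set r; s].
  apply/negP => /eqP e.
  have : p \in [set r; s] by rewrite -e !inE eqxx.
  move: rV sV; rewrite !inE => /andP [rp _] /andP [sp _].
  by rewrite !(eq_sym p) (negbTE rp) (negbTE sp).
suff h : (eV g V + #|[set [set p; q]; [set r; s]]| <= 'C(#|V|, 2))%N.
  by rewrite cards2 ne cV addn2 in h.
apply: eV_pairs => //.
  apply/subsetP => X; rewrite !inE => /orP [] /eqP ->; rewrite ?inE cards2 ?npq ?nrs andbT;
  by apply/subsetP => x; rewrite !inE => /orP [] /eqP ->.
rewrite disjoint_sym disjoints_subset; apply/subsetP => X /edgesP [u [v [guv ->]]].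
have ee : [set u; v] \in edges g by apply/edgesP; exists u, v.
rewrite !inE; apply/negP => /orP [] /eqP e.
  by move: (nonedge sym ng); rewrite -e ee.
by move: (nonedge sym ng2); rewrite -e ee.
Qed.

Lemma block_exists (T : finType) (g : rel T) k :
  forall S : {set T}, (#|T| - #|S| <= k)%N -> two_connected g S ->
  exists B : {set T}, S \subset B /\ is_block g B.
Proof.
elim: k => [|k IH] S hk tS.
  exists S; split => //; split => // S' sS' _.
  apply/eqP; rewrite eq_sym eqEcard sS' /=.
  have := subset_leq_card (subsetT S'); rewrite cardsT; lia.
have [bS|nbS] := classic (is_block g S); first by exists S.
have [S' hS'] : exists S' : {set T}, ~ (S \subset S' -> two_connected g S' -> S' = S).
  apply: NNPP => H; apply: nbS; split => // S' sS' tS'.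
  apply: NNPP => ne; apply: H; exists S' => h; apply: ne; exact: h.
have sS' : S \subset S' by apply: NNPP => h; apply: hS' => /h.
have tS' : two_connected g S' by apply: NNPP => h; apply: hS' => _ /h.
have neS : S' != S by apply/eqP => e; apply: hS' => _ _.
have [|B [sB bB]] := IH S' _ tS'; last first.
  by exists B; split => //; apply: subset_trans sB.
have : (#|S| < #|S'|)%N by apply: proper_card; rewrite properEneq eq_sym neS.
have := subset_leq_card (subsetT S'); rewrite cardsT; lia.
Qed.

Definition Rw (T : finType) (g : rel T) (W : {set T}) : rel T :=
  [rel a b | (a \in W) && (b \in W) && g a b].

Lemma main_bound (T : finType) (g : rel T) :
  symmetric g -> irreflexive g -> ~ has_K4 g ->
  (forall S : {set T}, is_block g S -> (#|S| <= 5)%N) ->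
  forall n (V : {set T}), (#|V| <= n)%N -> V != set0 ->
  (eV g V + 2 <= 2 * #|V|)%N.
Proof.
move=> sym irr nK hB; elim=> [|n IH] V cV nV.
  by move: nV; rewrite -card_gt0; lia.
have [[W [y [z [sW cW yW zW nc]]]] | H] := classic (exists (W : {set T}) (y z : T),
  [/\ W \subset V, (#|V :\: W| <= 1)%N, y \in W, z \in W & ~~ connect (Rw g W) y z]).
  set C := [set u in W | connect (Rw g W) y u].
  set A := C :|: (V :\: W).
  set B := V :\: C.
  have sCW : C \subset W by apply/subsetP => u; rewrite inE => /andP[].
  have sCV : C \subset V by apply: subset_trans sW.
  have yC : y \in C by rewrite inE yW connect0.
  have zC : z \notin C by rewrite inE zW.
  have zV : z \in V by apply: (subsetP sW).
  have yV : y \in V by apply: (subsetP sW).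
  have clo : forall u v, u \in C -> v \in W -> g u v -> v \in C.
    move=> u v; rewrite !inE => /andP [uW cu] vW guv; rewrite vW /=.
    apply: connect_trans cu _; apply: connect1; by rewrite /Rw /= uW vW guv.
  have sAV : A \subset V by rewrite subUset sCV subsetDl.
  have sAz : A \subset V :\ z.
    apply/subsetP => u uA; rewrite !inE (subsetP sAV _ uA) andbT.
    apply/negP => /eqP euz; move: uA; rewrite euz in_setU (negbTE zC) in_setD zW.
    by [].
  have sBy : B \subset V :\ y.
    apply/subsetP => u; rewrite /B in_setD in_setD1 => /andP [uC uV]; rewrite uV andbT.
    by apply/negP => /eqP euy; move: uC; rewrite euy yC.
  have cVz := cardsD1 z V; rewrite zV in cVz.
  have cVy := cardsD1 y V; rewrite yV in cVy.
  have cA1 := subset_leq_card sAz.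
  have cB1 := subset_leq_card sBy.
  have cA2 : (#|A| <= #|C| + #|V :\: W|)%N by rewrite cardsU leq_subr.
  have cB2 : #|B| = (#|V| - #|C|)%N by rewrite cardsD (setIidPr sCV).
  have cC := subset_leq_card sCV.
  have nA : A != set0 by apply/set0Pn; exists y; rewrite inE yC.
  have nB : B != set0 by apply/set0Pn; exists z; rewrite inE zC zV.
  have hA : (eV g A + 2 <= 2 * #|A|)%N.
    apply: IH nA; rewrite -ltnS; apply: leq_trans cV.
    by rewrite cVz add1n ltnS.
  have hB' : (eV g B + 2 <= 2 * #|B|)%N.
    apply: IH nB; rewrite -ltnS; apply: leq_trans cV.
    by rewrite cVy add1n ltnS.
  have split : (eV g V <= eV g A + eV g B)%N.
    rewrite /eV; apply: leq_trans (leq_card_setU _ _).1.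
    apply: subset_leq_card; apply/subsetP => E.
    rewrite [E \in _]inE => /andP [/edgesP [u [v [guv eE]]] sEV].
    have uV : u \in V by apply: (subsetP sEV); rewrite eE !inE eqxx.
    have vV : v \in V by apply: (subsetP sEV); rewrite eE !inE eqxx orbT.
    have eEg : E \in edges g by apply/edgesP; exists u, v.
    suff [h|h] : E \subset A \/ E \subset B.
    - by rewrite in_setU; apply/orP; left; rewrite inE eEg h.
    - by rewrite in_setU; apply/orP; right; rewrite inE eEg h.
    rewrite eE !subUset !sub1set.
    have [uC|uC] := boolP (u \in C); have [vC|vC] := boolP (v \in C).
    - by left; rewrite /A !in_setU uC vC.
    - left; case vW: (v \in W); first by move: vC; rewrite (clo u v uC vW guv).
      by rewrite /A !in_setU !in_setD uC vW vV orbT.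
    - left; case uW: (u \in W); first by move: uC; rewrite (clo v u vC uW); rewrite // sym.
      by rewrite /A !in_setU !in_setD vC uW uV orbT.
    - by right; rewrite /B !in_setD uC vC uV vV.
  move: split hA hB' cA2 cB2 cC cW; clear.
  move: (eV g V) (eV g A) (eV g B) #|A| #|B| #|C| #|V| #|V :\: W|.
  move=> a b c d e f h i; lia.
have conn : forall W : {set T}, W \subset V -> (#|V :\: W| <= 1)%N ->
    induced_connected g W.
  move=> W sW cW x y xW yW; apply/negPn/negP => nc; apply: H.
  by exists W, x, y; split.
have hC := eV_le_C V irr.
have [v0 v0V] : exists v, v \in V by apply/set0Pn.
have c1 : (1 <= #|V|)%N by rewrite card_gt0.
case: (ltngtP #|V| 1) => [|c2|e1]; first lia; last first.
  by move: hC; rewrite e1 bin_small //; lia.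
have tV : two_connected g V.
  split => //; split.
    by apply: conn => //; rewrite setDv cards0.
  move=> v vV; apply: conn; first exact: subsetDl.
  rewrite -(cards1 v); apply: subset_leq_card; apply/subsetP => u.
  by rewrite !inE; case: eqP; case: (u \in V).
have [B [sVB bB]] := @block_exists T g (#|T| - #|V|) V (leqnn _) tV.
have c5 := leq_trans (subset_leq_card sVB) (hB _ bB).
move: hC; case E: #|V| => [|[|[|[|[|[|k]]]]]] //; rewrite E in c5 c2 => // hC.
- have e : 'C(2, 2) = 1 by []. lia.
- have e : 'C(3, 2) = 3 by []. lia.
- have e : 'C(4, 2) = 6 by []. lia.
- have := eV5 sym irr nK E; lia.
Qed.

Local Open Scope ring_scope.

Theorem corollary4 (T : finType) (g : rel T) :
  symmetric g -> irreflexive g ->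
  planar g ->
  (2 <= #|T|)%N ->
  ~ has_K4 g -> ~ has_C6 g ->
  (forall S : {set T}, is_block g S -> (#|S| <= 5)%N) ->
  (nedges g)%:R <= (31%:R / 15%:R : rat) * (#|T|)%:R - 7%:R / 3%:R.
Proof.
move=> sym irr _ c2 nK _ hB.
have eT : nedges g = eV g setT.
  rewrite /nedges /eV; apply: eq_card => E; by rewrite inE subsetT andbT.
have cT : #|[set: T]| = #|T| by rewrite cardsT.
have nT : [set: T] != set0 by rewrite -card_gt0 cT; lia.
have hM := main_bound sym irr nK hB (leqnn _) nT.
have hC := eV_le_C [set: T] irr.
rewrite eT; rewrite cT in hM hC.
have [b [hb hbR]] : exists b : nat, (eV g [set: T] <= b)%N /\
    b%:R <= (31%:R / 15%:R : rat) * (#|T|)%:R - 7%:R / 3%:R.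
  case: (leqP 5 #|T|) => h5.
    exists (2 * #|T| - 2)%N; split; first lia.
    rewrite natrB ?natrM; last lia.
    have : (5%:R <= (#|T|)%:R :> rat) by rewrite ler_nat.
    move=> h; lra.
  move: hC h5 c2; case E: #|T| => [|[|[|[|[|k]]]]] // hC _ _.
  - exists 1%N; split; last lra.
    by have e : 'C(2, 2) = 1%N by []; rewrite e in hC.
  - exists 3%N; split; last lra.
    by have e : 'C(3, 2) = 3%N by []; rewrite e in hC.
  - exists 5%N; split; last lra.
    by apply: eV4 => //; rewrite cardsT.
apply: le_trans hbR; by rewrite ler_nat.
Qed.
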